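(* Let $f^{cl}_{\pi_\star}$ be $\eta$-locally $\delta$-ISS for some $\eta>0$, with gain $\gamma$ satisfying $\gamma(x)\le O(x^{1/r})$ as $x\to0^+$ for some $r\ge1$. Fix a test policy $\pi$ and initial condition $\xi\in\mathcal X$, and let $p\in\mathbb N$ satisfy $p+1-r>0$. Assume $\pi$ and $\pi_\star$ are $p$-times continuously differentiable and there is $L_{\partial^p\pi}\ge0$ with \[\Big\|\bar\pi(x)-\sum_{j=0}^p\tfrac1{j!}\partial_x^j\bar\pi(x_0)(x-x_0)^{\otimes j}\Big\|\le\tfrac{L_{\partial^p\pi}}{(p+1)!}\|x-x_0\|^{p+1}\] for all $x,x_0$ and $\bar\pi\in\{\pi,\pi_\star\}$. Choose $\mu,\alpha>0$ with $\alpha\le1/2$ such that \[2\tfrac{L_{\partial^p\pi}}{(p+1)!}x^{p+1}+(x/\mu)^r\le\gamma^{-1}(x)\quad\text{for all }0\le x\le\alpha.\] If \[\max_{0\le t\le T-1}\max_{0\le j\le p}\mu\Big(\tfrac{2}{j!}\|\partial_x^j\Delta_t^{\pi_\star}(\xi;\pi)\|\Big)^{1/r}\le\alpha,\] \[\max_{0\le t\le T-1}\max_{0\le j\le p}\Big[\tfrac{2L_{\partial^p\pi}\mu^{p+1}}{(p+1)!}\Big(\tfrac{2}{j!}\|\partial_x^j\Delta_t^{\pi_\star}(\xi;\pi)\|\Big)^{\frac{p+1}{r}}+\tfrac{2}{j!}\|\partial_x^j\Delta_t^{\pi_\star}(\xi;\pi)\|\Big]\le\eta,\] then for all $1\le t\le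 T$, \[\|x_t^{\pi_\star}(\xi)-x_t^\pi(\xi)\|\le\max_{0\le k\le t-1}\max_{0\le j\le p}\mu\Big(\tfrac{2}{j!}\|\partial_x^j\Delta_k^{\pi_\star}(\xi;\pi)\|\Big)^{1/r}.\]
   Context: Dynamics $x_{t+1}=f(x_t,u_t)$, $x_0=\xi$, $x_t\in\mathbb R^d,u_t\in\mathbb R^m$. For a policy $\pi$, perturbed closed loop $x_{t+1}=f^{cl}_\pi(x_t,\Delta_t):=f(x_t,\pi(x_t)+\Delta_t)$, states $x_t^\pi(\xi,\{\Delta_s\})$, $x_t^\pi(\xi):=x_t^\pi(\xi,\{0\})$. Initial conditions lie in a compact set $\mathcal X$. Norms: Euclidean on vectors, operator norm on matrices/tensors; $\otimes$ is the tensor power. Class $\mathcal K$/$\mathcal{KL}$ functions as standard. $f^{cl}_\pi$ is $\eta$-locally $\delta$-ISS if there are class $\mathcal{KL}$ $\beta$ and class $\mathcal K$ $\gamma$ with $\|x_t^\pi(\xi_1;\{\Delta_s\}_{s=0}^{t-1})-x_t^\pi(\xi_2;\{0\})\|\le\beta(\|\xi_1-\xi_2\|,t)+\gamma(\max_{0\le k\le t-1}\|\Delta_k\|)$ for all $\xi_1,\xi_2\in\mathcal X$, $t\in\mathbb N$, and perturbations with $\sup_t\|\Delta_t\|\le\eta$. $\gamma^{-1}$ is the inverse of $\gamma$ on its range (with $\gamma^{-1}(x)=+\infty$ for $x\ge\sup\gamma$). $\pi_\star$ is the expert policy, and $\partial_x^j\Delta_t^{\pi_\star}(\xi;\pi):=\partial_x^j\pi(x_t^{\pi_\star}(\xi))-\partial_x^j\pi_\star(x_t^{\pi_\star}(\xi))$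 (the $j$-th derivative of the policies with respect to their argument, evaluated on the expert trajectory). *)

(* Defs.v *)
From HB Require Import structures.
From mathcomp Require Import all_boot all_order all_algebra.
From mathcomp Require Import all_classical all_reals all_analysis.
Set Implicit Arguments. Unset Strict Implicit. Unset Printing Implicit Defensive.
Import Order.TTheory GRing.Theory Num.Theory.
Import numFieldNormedType.Exports.
Local Open Scope classical_set_scope.
Local Open Scope ring_scope.

Section Defs.
Variable R : realType.

(* Euclidean norm on row vectors (the library norm on 'rV is the sup norm). *)
Definition enorm (n : nat) (v : 'rV[R]_n) : R :=
  Num.sqrt (\sum_(i < n) v ord0 i ^+ 2).

(* Iterated directional derivative:
   iderive g [:: h1; ...; hj] x = d^j g(x)[h1,...,hj]. *)
Fixpoint iderive (d m : nat) (g : 'rV[R]_d -> 'rV[R]_m) (hs : seq 'rV[R]_d)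
  : 'rV[R]_d -> 'rV[R]_m :=
  match hs with
  | [::] => g
  | h :: hs' => fun x => derive (iderive g hs') x h
  end.

Definition unit_dirs (d j : nat) : set (seq 'rV[R]_d) :=
  [set hs | size hs = j /\ all (fun h => enorm h <= 1) hs].

Definition opnorm (d m j : nat) (F : seq 'rV[R]_d -> 'rV[R]_m) : R :=
  sup [set enorm (F hs) | hs in @unit_dirs d j].

Definition Cp (d m p : nat) (g : 'rV[R]_d -> 'rV[R]_m) : Prop :=
  forall hs : seq 'rV[R]_d,
    ((size hs < p)%N -> forall x, differentiable (iderive g hs) x) /\
    ((size hs <= p)%N -> continuous (iderive g hs)).

Fixpoint traj (d m : nat) (f : 'rV[R]_d -> 'rV[R]_m -> 'rV[R]_d)
  (pi : 'rV[R]_d -> 'rV[R]_m) (xi : 'rV[R]_d) (Delta : nat -> 'rV[R]_m)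
  (t : nat) : 'rV[R]_d :=
  match t with
  | 0 => xi
  | t'.+1 => let x := traj f pi xi Delta t' in f x (pi x + Delta t')
  end.

Definition zeroPert (m : nat) : nat -> 'rV[R]_m := fun _ => 0.

Definition classK (g : R -> R) : Prop :=
  g 0 = 0 /\
  {within [set x | 0 <= x], continuous g} /\
  {in [set x | 0 <= x] &, forall x y, x < y -> g x < g y}.

Definition classKL (b : R -> nat -> R) : Prop :=
  (forall t, classK (fun s => b s t)) /\
  (forall s, 0 <= s -> forall t1 t2 : nat, (t1 <= t2)%N -> b s t2 <= b s t1) /\
  (forall s, 0 <= s -> (fun t : nat => b s t) @ \oo --> 0).

Definition dISS_with (d m : nat) (f : 'rV[R]_d -> 'rV[R]_m -> 'rV[R]_d)
  (pi : 'rV[R]_d -> 'rV[R]_m) (X : set 'rV[R]_d) (eta : R)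
  (beta : R -> nat -> R) (gamma : R -> R) : Prop :=
  forall xi1 xi2, X xi1 -> X xi2 ->
  forall Delta : nat -> 'rV[R]_m, (forall t, enorm (Delta t) <= eta) ->
  forall t : nat,
    enorm (traj f pi xi1 Delta t - traj f pi xi2 (@zeroPert m) t)
      <= beta (enorm (xi1 - xi2)) t
         + gamma (\big[Num.max/0]_(k < t) enorm (Delta k)).

Definition loc_dISS (d m : nat) (f : 'rV[R]_d -> 'rV[R]_m -> 'rV[R]_d)
  (pi : 'rV[R]_d -> 'rV[R]_m) (X : set 'rV[R]_d) (eta : R) : Prop :=
  exists beta gamma, classKL beta /\ classK gamma /\ dISS_with f pi X eta beta gamma.

(* gamma^{-1}: inverse of gamma on its range, +oo outside it *)
Definition ginv (g : R -> R) (x : R) : \bar R :=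
  match pselect (exists y, 0 <= y /\ g y = x) with
  | left P => (projT1 (cid P))%:E
  | right _ => +oo%E
  end.

Definition dDelta (d m : nat) (pi pistar : 'rV[R]_d -> 'rV[R]_m) (j : nat)
  (x : 'rV[R]_d) : R :=
  @opnorm d m j (fun hs => iderive pi hs x - iderive pistar hs x).

End Defs.

(* Main.v *)
Require Import Defs.
From HB Require Import structures.
From mathcomp Require Import all_boot all_order all_algebra.
From mathcomp Require Import all_classical all_reals all_analysis.
From mathcomp Require Import zify ring lra.
Import Order.TTheory GRing.Theory Num.Theory.
Import numFieldNormedType.Exports.
Local Open Scope classical_set_scope.
Local Open Scope ring_scope.


Section Enorm.
Variable R : realType.
Implicit Types (n : nat).

Lemma ssq_ge0 {n} (v : 'rV[R]_n) : 0 <= \sum_(i < n) v ord0 i ^+ 2.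
Proof. by apply: sumr_ge0 => i _; rewrite sqr_ge0. Qed.

Lemma enorm_ge0 {n} (v : 'rV[R]_n) : 0 <= enorm v.
Proof. exact: sqrtr_ge0. Qed.

Lemma enormZ {n} (c : R) (v : 'rV[R]_n) : enorm (c *: v) = `|c| * enorm v.
Proof.
rewrite /enorm (eq_bigr (fun i => c ^+ 2 * v ord0 i ^+ 2)); last first.
  by move=> i _; rewrite mxE exprMn.
by rewrite -mulr_sumr sqrtrM ?sqr_ge0 // sqrtr_sqr.
Qed.

Lemma enorm0 n : enorm (0 : 'rV[R]_n) = 0.
Proof. by rewrite -(scale0r (0 : 'rV[R]_n)) enormZ normr0 mul0r. Qed.

Lemma enormN {n} (v : 'rV[R]_n) : enorm (- v) = enorm v.
Proof. by rewrite -scaleN1r enormZ normrN normr1 mul1r. Qed.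

Lemma enormB {n} (u v : 'rV[R]_n) : enorm (u - v) = enorm (v - u).
Proof. by rewrite -enormN opprB. Qed.

Lemma coord_le {n} (v : 'rV[R]_n) k : `|v ord0 k| <= enorm v.
Proof.
rewrite -sqrtr_sqr /enorm ler_sqrt ?ssq_ge0 //.
rewrite (bigD1 k) //= lerDl; apply: sumr_ge0 => i _; exact: sqr_ge0.
Qed.

Lemma enorm_eq0 {n} (v : 'rV[R]_n) : enorm v = 0 -> v = 0.
Proof.
move=> H; apply/rowP => k; rewrite mxE.
have := coord_le v k; rewrite H => Hk.
have : `|v ord0 k| = 0 by apply: le_anti; rewrite Hk normr_ge0.
by move/eqP; rewrite normr_eq0 (ord1 0) => /eqP.
Qed.

Lemma sqrt_ssq {n} (v : 'rV[R]_n) : enorm v ^+ 2 = \sum_(i < n) v ord0 i ^+ 2.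
Proof. by rewrite sqr_sqrtr // ssq_ge0. Qed.

Lemma cauchy_schwarz {n} (u v : 'rV[R]_n) :
  \sum_(i < n) u ord0 i * v ord0 i <= enorm u * enorm v.
Proof.
set A := enorm u; set B := enorm v; set S := \sum_(i < n) _.
have H0 : 0 <= \sum_(i < n) (B * u ord0 i - A * v ord0 i) ^+ 2.
  by apply: sumr_ge0 => i _; exact: sqr_ge0.
have E : \sum_(i < n) (B * u ord0 i - A * v ord0 i) ^+ 2 =
   B ^+ 2 * (\sum_(i < n) u ord0 i ^+ 2) - (2 * A * B) * S
   + A ^+ 2 * (\sum_(i < n) v ord0 i ^+ 2).
  rewrite !mulr_sumr -sumrB -big_split /=; apply: eq_bigr => i _; ring.
rewrite E -!sqrt_ssq -/A -/B in H0.
have HA : 0 <= A by exact: enorm_ge0.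
have HB : 0 <= B by exact: enorm_ge0.
have [AB0|ABp] := eqVneq (A * B) 0.
  move/eqP: AB0; rewrite mulf_eq0 => /orP[] /eqP Z.
  - have Hu : u = 0 by apply: enorm_eq0.
    by rewrite /S big1 ?Z ?mul0r // => i _; rewrite Hu mxE mul0r.
  - have Hv : v = 0 by apply: enorm_eq0.
    by rewrite /S big1 ?Z ?mulr0 // => i _; rewrite Hv mxE mulr0.
have ABpos : 0 < A * B by rewrite lt_def ABp mulr_ge0.
have : 0 <= (A * B) * (2 * (A * B - S)).
  apply: le_trans H0 _; rewrite le_eqVlt; apply/orP; left; apply/eqP; ring.
rewrite pmulr_rge0 // pmulr_rge0 //; lra.
Qed.

Lemma enormD {n} (u v : 'rV[R]_n) : enorm (u + v) <= enorm u + enorm v.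
Proof.
have Hu := enorm_ge0 u; have Hv := enorm_ge0 v.
rewrite -(ler_pXn2r (_ : (0 < 2)%N)) ?nnegrE ?addr_ge0 ?enorm_ge0 //.
rewrite sqrt_ssq sqrrD !sqrt_ssq.
rewrite (eq_bigr (fun i => u ord0 i ^+ 2 + v ord0 i ^+ 2 + 2 * (u ord0 i * v ord0 i))); last first.
  by move=> i _; rewrite mxE; ring.
rewrite !big_split /= -mulr_sumr.
have := cauchy_schwarz u v; rewrite mulr2n; lra.
Qed.

Lemma enorm_sum {n} I (r : seq I) (P : pred I) (F : I -> 'rV[R]_n) :
  enorm (\sum_(i <- r | P i) F i) <= \sum_(i <- r | P i) enorm (F i).
Proof.
apply: (big_ind2 (fun x y => enorm x <= y)); first by rewrite enorm0.
  move=> x1 y1 x2 y2 H1 H2; apply: le_trans (enormD _ _) _; exact: lerD.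
by [].
Qed.

End Enorm.


Section Deriv.
Variable R : realType.
Variables (d m p : nat) (g : 'rV[R]_d -> 'rV[R]_m).
Hypothesis Hg : Cp p g.

Lemma dlin (F : 'rV[R]_d -> 'rV[R]_m) (x : 'rV[R]_d) (a b : R) (v w : 'rV[R]_d) :
  differentiable F x -> derive F x (a *: v + b *: w) = a *: derive F x v + b *: derive F x w.
Proof. move=> Hd. by rewrite !deriveE // linearD !linearZZ. Qed.

Lemma dcomb (F1 F2 : 'rV[R]_d -> 'rV[R]_m) (x h : 'rV[R]_d) (a b : R) :
  differentiable F1 x -> differentiable F2 x ->
  derive ((a \*: F1) + (b \*: F2)) x h = a *: derive F1 x h + b *: derive F2 x h.
Proof.
move=> Hv Hw.
have HvZ := differentiableZ a Hv.
have HwZ := differentiableZ b Hw.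
rewrite deriveD ?deriveZ //; try exact: diff_derivable.
Qed.

Lemma slot_lin {pre post} : (size pre + size post < p)%N ->
  forall (a b : R) (v w x : 'rV[R]_d),
  iderive g (pre ++ (a *: v + b *: w) :: post) x =
  a *: iderive g (pre ++ v :: post) x + b *: iderive g (pre ++ w :: post) x.
Proof.
elim: pre => [|h pre IH] Hs a b v w x /=.
  by apply: dlin; apply: (Hg post).1.
have Hs' : (size pre + size post < p)%N by move: Hs => /=; lia.
have Hsz : forall u, (size (pre ++ u :: post) < p)%N.
  by move=> u; rewrite size_cat /=; move: Hs => /=; lia.
have E : iderive g (pre ++ (a *: v + b *: w) :: post) =
   (a \*: iderive g (pre ++ v :: post)) + (b \*: iderive g (pre ++ w :: post)).
  by apply/funext => y; rewrite IH.
by rewrite E dcomb //; apply: (Hg _).1.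
Qed.

Lemma slot_sum pre post : (size pre + size post < p)%N ->
  forall (x : 'rV[R]_d) (I : Type) (r : seq I) (P : pred I) (c : I -> R) (v : I -> 'rV[R]_d),
  iderive g (pre ++ (\sum_(i <- r | P i) c i *: v i) :: post) x =
  \sum_(i <- r | P i) c i *: iderive g (pre ++ v i :: post) x.
Proof.
move=> Hs x I r P c v.
elim: r => [|i r IH].
  by rewrite !big_nil; have := slot_lin Hs 0 0 0 0 x; rewrite !scale0r !addr0.
rewrite !big_cons; case: (P i) => //.
by rewrite -IH; have := slot_lin Hs (c i) 1 (v i) (\sum_(j <- r | P j) c j *: v j) x; rewrite !scale1r.
Qed.


Lemma nseq_hom j (c : R) (u x : 'rV[R]_d) : (j <= p)%N ->
  iderive g (nseq j (c *: u)) x = c ^+ j *: iderive g (nseq j u) x.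
Proof.
elim: j x => [|j IH] x Hj /=; first by rewrite scale1r.
have -> : iderive g (nseq j (c *: u)) = c ^+ j \*: iderive g (nseq j u).
  by apply/funext => y; rewrite IH //; lia.
have Hd : differentiable (iderive g (nseq j u)) x.
  by apply: (Hg _).1; rewrite size_nseq; lia.
rewrite deriveZ; last exact: diff_derivable.
by rewrite deriveE // linearZZ -deriveE // scalerA exprS mulrC.
Qed.

Lemma bnd (x : 'rV[R]_d) n : forall pre, (size pre + n <= p)%N ->
  exists C, 0 <= C /\ forall hs, size hs = n -> all (fun h => enorm h <= 1) hs ->
     enorm (iderive g (pre ++ hs) x) <= C.
Proof.
elim: n => [|n IH] pre Hs.
  exists (enorm (iderive g (pre ++ [::]) x)); split; first exact: enorm_ge0.
  by case.
have : forall k : 'I_d, exists C, 0 <= C /\ forall hs, size hs = n ->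
   all (fun h => enorm h <= 1) hs ->
   enorm (iderive g ((pre ++ [:: 'e_k]) ++ hs) x) <= C.
  by move=> k; apply: IH; rewrite size_cat /=; lia.
move=> /boolp.choice [Cf HC].
exists (\sum_k Cf k); split; first by apply: sumr_ge0 => k _; case: (HC k).
case=> [|h hs] //= [Hsz] /andP[Hh Hall].
rewrite {1}(row_sum_delta h) slot_sum; last by rewrite Hsz -addnS.
apply: le_trans; first exact: enorm_sum.
apply: ler_sum => k _; rewrite enormZ.
have Hk := (HC k).2 hs Hsz Hall; rewrite -catA /= in Hk.
rewrite -[Cf k]mul1r; apply: ler_pM => //; try exact: normr_ge0; try exact: enorm_ge0.
have -> : (0 : 'I_1) = ord0 by apply/val_inj.
apply: le_trans _ Hh; exact: (coord_le _ h k).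
Qed.

End Deriv.


Section Key.
Variable R : realType.

Lemma dDelta_bound (d m p : nat) (pi pistar : 'rV[R]_d -> 'rV[R]_m) :
  Cp p pi -> Cp p pistar -> forall j, (j <= p)%N -> forall (z h : 'rV[R]_d),
  0 <= dDelta pi pistar j z /\
  enorm (iderive pi (nseq j h) z - iderive pistar (nseq j h) z)
    <= dDelta pi pistar j z * enorm h ^+ j.
Proof.
move=> Hp Hs j Hj z h.
set F := fun hs => iderive pi hs z - iderive pistar hs z.
set S := [set enorm (F hs) | hs in @unit_dirs R d j].
have [C1 [C1ge HC1]] := @bnd R d m p pi Hp z j [::] Hj.
have [C2 [C2ge HC2]] := @bnd R d m p pistar Hs z j [::] Hj.
have Hub : has_ubound S.
  exists (C1 + C2) => y [hs [Hsz Hall] <-].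
  rewrite /F; apply: le_trans (enormD _ _ _) _; rewrite enormN.
  by apply: lerD; [exact: HC1 | exact: HC2].
have Hsup : forall hs, unit_dirs j hs -> enorm (F hs) <= sup S.
  by move=> hs Hhs; apply: ub_le_sup => //; exists hs.
have Hu : forall u : 'rV[R]_d, enorm u <= 1 -> enorm (F (nseq j u)) <= sup S.
  move=> u Hu; apply: Hsup; split; first by rewrite size_nseq.
  by rewrite all_nseq Hu orbT.
have H0 : 0 <= sup S.
  apply: le_trans (Hu 0 _); first exact: enorm_ge0.
  by rewrite enorm0.
rewrite /dDelta /opnorm -/F -/S; split => //.
pose u := if enorm h == 0 then 0 else (enorm h)^-1 *: h.
have Eh : h = enorm h *: u.
  rewrite /u; case: eqP => [E|/eqP E]; first by rewrite scaler0; exact: enorm_eq0.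
  by rewrite scalerA divff // scale1r.
have Hu1 : enorm u <= 1.
  rewrite /u; case: eqP => [E|/eqP E]; first by rewrite enorm0.
  rewrite enormZ ger0_norm ?invr_ge0 ?enorm_ge0 // mulVf //.
change (enorm (F (nseq j h)) <= sup S * enorm h ^+ j).
have -> : F (nseq j h) = enorm h ^+ j *: F (nseq j u).
  rewrite /F {1 2}Eh (@nseq_hom R d m p pi Hp j _ u z Hj).
  by rewrite (@nseq_hom R d m p pistar Hs j _ u z Hj) scalerBr.
rewrite enormZ ger0_norm ?exprn_ge0 ?enorm_ge0 // mulrC.
apply: ler_wpM2r; first by rewrite exprn_ge0 ?enorm_ge0.
exact: Hu.
Qed.
End Key.


Section Misc.
Variable R : realType.



Lemma bigmaxr_le n (F : 'I_n -> R) y : 0 <= y -> (forall i, F i <= y) ->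
  \big[Num.max/0]_(i < n) F i <= y.
Proof.
move=> H0 H; elim/big_rec: _ => // i z _ Hz; rewrite ge_max Hz andbT; exact: H.
Qed.

Lemma le_bigmaxr n (F : 'I_n -> R) i : F i <= \big[Num.max/0]_(i < n) F i.
Proof.
rewrite (bigD1 i) //= le_max lexx //.
Qed.

Lemma bigmax_ge0 n (F : 'I_n -> R) : 0 <= \big[Num.max/0]_(i < n) F i.
Proof.
elim/big_rec: _ => // i y _ Hy; rewrite le_max Hy orbT //.
Qed.

Lemma bigmax_att n (F : 'I_n -> R) : (0 < n)%N -> (forall i, 0 <= F i) ->
  exists i, \big[Num.max/0]_(i < n) F i = F i.
Proof.
elim: n F => // n IH F _ HF.
rewrite big_ord_recl /=.
case: n IH F HF => [|n] IH F HF.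
  by exists ord0; rewrite big_ord0 max_l.
have [i Hi] := IH (fun i => F (lift ord0 i)) isT (fun i => HF _).
rewrite Hi.
case: (leP (F ord0) (F (lift ord0 i))) => H.
  by exists (lift ord0 i).
by exists ord0.
Qed.

Lemma geom_le2 (x : R) n : 0 <= x -> x <= 2^-1 -> \sum_(j < n) x ^+ j <= 2.
Proof.
move=> H0 H1; elim: n => [|n IH]; first by rewrite big_ord0.
rewrite big_ord_recl expr0.
have -> : \sum_(i < n) x ^+ (bump 0 i) = x * \sum_(i < n) x ^+ i.
  by rewrite mulr_sumr; apply: eq_bigr => i _; rewrite exprS.
have : x * \sum_(i < n) x ^+ i <= 2^-1 * 2.
  apply: ler_pM => //; apply: sumr_ge0 => i _; exact: exprn_ge0.
rewrite mulVf // => H; lra.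
Qed.

Lemma ginv_le (g : R -> R) (x M : R) : classK g -> 0 <= x -> 0 <= M ->
  (M%:E <= ginv g x)%E -> g M <= x.
Proof.
move=> [g0 [gc gm]] Hx HM; rewrite /ginv.
case: pselect => [P|nP].
  case: (cid P) => y [Hy Hgy] /=; rewrite lee_fin => HMy.
  rewrite -Hgy; move: HMy; rewrite le_eqVlt => /orP[/eqP -> //|Hlt].
  by apply: ltW; apply: gm => //; rewrite in_setE.
move=> _; rewrite leNgt; apply/negP => Hlt.
apply: nP.
have Hc : {within `[0, M], continuous g}.
  apply: continuous_subspaceW gc => y /=; rewrite in_itv /= => /andP[].
  by [].
have Hv : Num.min (g 0) (g M) <= x <= Num.max (g 0) (g M).
  rewrite g0; apply/andP; split.
    by rewrite ge_min Hx.
  by rewrite le_max (ltW Hlt) orbT.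
have [c Hc1 Hc2] := IVT HM Hc Hv.
exists c; split => //; move: Hc1; rewrite in_itv /= => /andP[] //.
Qed.

End Misc.

Lemma traj_eq (R : realType) (d m : nat) (f : 'rV[R]_d -> 'rV[R]_m -> 'rV[R]_d)
  (pi pistar : 'rV[R]_d -> 'rV[R]_m) (xi : 'rV[R]_d) (t : nat) :
  forall k, (k <= t)%N ->
  traj f pistar xi (fun k => if (k < t)%N then
       pi (traj f pi xi (@zeroPert R m) k) - pistar (traj f pi xi (@zeroPert R m) k) else 0) k
  = traj f pi xi (@zeroPert R m) k.
Proof.
elim=> [|k IH] Hk //=.
rewrite IH ?(ltnW Hk) // Hk /zeroPert addr0.
by rewrite addrC subrK.
Qed.


Theorem theorem2 (R : realType) (d m : nat)
  (f : 'rV[R]_d -> 'rV[R]_m -> 'rV[R]_d) (X : set 'rV[R]_d)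
  (pistar pi : 'rV[R]_d -> 'rV[R]_m)
  (eta : R) (beta : R -> nat -> R) (gamma : R -> R) (r : R)
  (xi : 'rV[R]_d) (p : nat) (L mu alpha : R) (T : nat) :
  compact X ->
  0 < eta ->
  classKL beta -> classK gamma ->
  dISS_with f pistar X eta beta gamma ->
  1 <= r ->
  (exists C e : R, 0 < e /\ forall x, 0 < x < e -> gamma x <= C * x `^ r^-1) ->
  X xi ->
  0 < p.+1%:R - r ->
  Cp p pi -> Cp p pistar ->
  0 <= L ->
  (forall pb, pb = pi \/ pb = pistar -> forall x x0 : 'rV[R]_d,
     enorm (pb x - \sum_(j < p.+1) (j`!%:R)^-1 *: iderive pb (nseq j (x - x0)) x0)
       <= L / (p.+1)`!%:R * enorm (x - x0) ^+ p.+1) ->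
  0 < mu -> 0 < alpha -> alpha <= 2^-1 ->
  (forall x, 0 <= x <= alpha ->
     ((2 * L / (p.+1)`!%:R * x ^+ p.+1 + (x / mu) `^ r)%:E <= ginv gamma x)%E) ->
  (forall t, (t < T)%N -> forall j, (j <= p)%N ->
     mu * (2 / j`!%:R * dDelta pi pistar j (traj f pistar xi (@zeroPert R m) t))
            `^ r^-1 <= alpha) ->
  (forall t, (t < T)%N -> forall j, (j <= p)%N ->
     let D := 2 / j`!%:R * dDelta pi pistar j (traj f pistar xi (@zeroPert R m) t) in
     2 * L * mu ^+ p.+1 / (p.+1)`!%:R * D `^ (p.+1%:R / r) + D <= eta) ->
  forall t, (1 <= t <= T)%N ->
    enorm (traj f pistar xi (@zeroPert R m) t - traj f pi xi (@zeroPert R m) t)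
      <= \big[Num.max/0]_(k < t) \big[Num.max/0]_(j < p.+1)
            (mu * (2 / j`!%:R * dDelta pi pistar j
                       (traj f pistar xi (@zeroPert R m) k)) `^ r^-1).
Proof.
move=> _ Heta HKL HK HISS Hr _ HXxi _ Hpi Hps HL Htay Hmu Halpha Halpha2 Hginv
  Hterm Heta2 t0 /andP[_ Ht0T].
have Hr0 : 0 < r by apply: lt_le_trans Hr.
have Hrn0 : r != 0 by rewrite gt_eqF.
have Hmun0 : mu != 0 by rewrite gt_eqF.
have powRK : forall a : R, 0 <= a -> (a `^ r^-1) `^ r = a.
  by move=> a Ha; rewrite -powRrM mulVf // powRr1.
have Hfact : forall n, 0 < (n`!)%:R :> R by move=> n; rewrite ltr0n fact_gt0.
have DB := @dDelta_bound R d m p pi pistar Hpi Hps.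
pose D (k j : nat) := 2 / j`!%:R * dDelta pi pistar j (traj f pistar xi (@zeroPert R m) k).
have HD0 : forall k j, (j <= p)%N -> 0 <= D k j.
  move=> k j Hj; apply: mulr_ge0; first by rewrite divr_ge0 // ltW.
  by case: (DB j Hj (traj f pistar xi (@zeroPert R m) k) 0).
pose M (t : nat) := \big[Num.max/0]_(k < t) \big[Num.max/0]_(j < p.+1)
            (mu * (2 / j`!%:R * dDelta pi pistar j
                       (traj f pistar xi (@zeroPert R m) k)) `^ r^-1).
change (enorm (traj f pistar xi (@zeroPert R m) t0 - traj f pi xi (@zeroPert R m) t0) <= M t0).
have Hterm0 : forall k (j : nat), 0 <= mu * (D k j) `^ r^-1.
  by move=> k j; rewrite mulr_ge0 ?powR_ge0 // ltW.
have main : forall n t, (t <= n)%N -> (t <= T)%N ->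
   enorm (traj f pistar xi (@zeroPert R m) t - traj f pi xi (@zeroPert R m) t) <= M t.
  elim=> [|n IHn] t Htn HtT.
    by move: Htn; rewrite leqn0 => /eqP ->; rewrite /= subrr enorm0 /M big_ord0.
  case: (posnP t) => [->|Htpos].
    by rewrite /= subrr enorm0 /M big_ord0.
  have IH : forall k, (k < t)%N ->
     enorm (traj f pistar xi (@zeroPert R m) k - traj f pi xi (@zeroPert R m) k) <= M k.
    move=> k Hk; apply: IHn; first by rewrite -ltnS (leq_trans Hk Htn).
    exact: ltnW (leq_trans Hk HtT).
  set x := M t.
  have Hx0 : 0 <= x by apply: bigmax_ge0.
  have Hxa : x <= alpha.
    apply: bigmaxr_le; first exact: ltW.
    move=> k; apply: bigmaxr_le; first exact: ltW.
    move=> j; apply: Hterm; [exact: leq_trans (ltn_ord k) HtT | exact: (ltn_ord j)].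
  have Hmono : forall k, (k <= t)%N -> M k <= x.
    move=> k Hk; apply: bigmaxr_le => // i.
    rewrite /x /M; apply: le_trans (le_bigmaxr R _ _ (widen_ord Hk i)); exact: lexx.
  set z := traj f pistar xi (@zeroPert R m).
  set y := traj f pi xi (@zeroPert R m).
  have He : forall k, (k < t)%N -> enorm (y k - z k) <= x.
    move=> k Hk; rewrite enormB; apply: le_trans (IH k Hk) _.
    exact: Hmono (ltnW Hk).
  have Hterm_le : forall k j, (k < t)%N -> (j <= p)%N -> mu * (D k j) `^ r^-1 <= x.
    move=> k j Hk Hj.
    have Hj' : (j < p.+1)%N by [].
    apply: le_trans (le_bigmaxr R _ _ (Ordinal Hk)).
    apply: le_trans (le_bigmaxr R _ _ (Ordinal Hj')); exact: lexx.
  have Hdel : forall k j, (k < t)%N -> (j <= p)%N -> D k j <= (x / mu) `^ r.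
    move=> k j Hk Hj.
    have H1 : (D k j) `^ r^-1 <= x / mu.
      by rewrite ler_pdivlMr // mulrC; apply: Hterm_le.
    rewrite -{1}(powRK _ (HD0 k j Hj)).
    apply: ge0_ler_powR; [exact: ltW | by rewrite nnegrE powR_ge0 | | exact: H1].
    by rewrite nnegrE; apply: le_trans H1; exact: powR_ge0.
  pose Phi := 2 * L / (p.+1)`!%:R * x ^+ p.+1 + (x / mu) `^ r.
  have HDelta : forall k, (k < t)%N -> enorm (pi (y k) - pistar (y k)) <= Phi.
    move=> k Hk.
    have Tay1 := Htay pi (or_introl erefl) (y k) (z k).
    have Tay2 := Htay pistar (or_intror erefl) (y k) (z k).
    set Tp := \sum_(j < p.+1) _ in Tay1.
    set Ts := \sum_(j < p.+1) _ in Tay2.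
    have Edec : pi (y k) - pistar (y k) = (pi (y k) - Tp) + (Ts - pistar (y k)) + (Tp - Ts).
      by apply/rowP => i; rewrite !mxE; ring.
    have Hek := He k Hk.
    have Hek0 : 0 <= enorm (y k - z k) by apply: enorm_ge0.
    have Hpow : enorm (y k - z k) ^+ p.+1 <= x ^+ p.+1 by apply: lerXn2r.
    have Hc : 0 <= L / (p.+1)`!%:R by rewrite divr_ge0 // ltW.
    have B1 : enorm (pi (y k) - Tp) <= L / (p.+1)`!%:R * x ^+ p.+1.
      by apply: le_trans Tay1 _; apply: ler_wpM2l.
    have B2 : enorm (Ts - pistar (y k)) <= L / (p.+1)`!%:R * x ^+ p.+1.
      by rewrite enormB; apply: le_trans Tay2 _; apply: ler_wpM2l.
    have B3 : enorm (Tp - Ts) <= (x / mu) `^ r.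
      rewrite /Tp /Ts -sumrB.
      apply: le_trans; first exact: enorm_sum.
      apply: (@le_trans _ _ (\sum_(j < p.+1) (2^-1 * (x / mu) `^ r) * x ^+ j)).
        apply: ler_sum => j _; rewrite -scalerBr enormZ ger0_norm; last first.
          by rewrite invr_ge0 ltW.
        have Hjp : (j <= p)%N by rewrite -ltnS ltn_ord.
        have [Hd0 Hd] := DB j Hjp (z k) (y k - z k).
        apply: le_trans (ler_wpM2l _ Hd) _; first by rewrite invr_ge0 ltW.
        have ED : (j`!%:R)^-1 * (dDelta pi pistar j (z k) * enorm (y k - z k) ^+ j)
            = (2^-1 * D k j) * enorm (y k - z k) ^+ j.
          rewrite mulrA; congr (_ * _); rewrite /D !mulrA mulVf ?mul1r //.
        rewrite ED; apply: ler_pM.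
        - by rewrite mulr_ge0 // HD0.
        - exact: exprn_ge0.
        - by apply: ler_wpM2l; [|exact: Hdel].
        - by apply: lerXn2r.
      rewrite -mulr_sumr.
      have G := geom_le2 R x p.+1 Hx0 (le_trans Hxa Halpha2).
      have c0 : 0 <= (x / mu) `^ r by apply: powR_ge0.
      have h2 : 0 <= 2^-1 :> R by rewrite invr_ge0.
      have H := ler_wpM2l (mulr_ge0 h2 c0) G.
      apply: le_trans H _; lra.
    rewrite Edec; apply: le_trans (enormD _ _ _) _.
    have := enormD R (pi (y k) - Tp) (Ts - pistar (y k)).
    rewrite /Phi; lra.
  have HPhi : Phi <= eta.
    have [k0 Hk0] := bigmax_att R _ (fun k : 'I_t => \big[Num.max/0]_(j < p.+1)
            (mu * (2 / j`!%:R * dDelta pi pistar j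
                       (traj f pistar xi (@zeroPert R m) k)) `^ r^-1)) Htpos
                       (fun k => bigmax_ge0 R _ _).
    have [j0 Hj0] := bigmax_att R _ (fun j : 'I_p.+1 => 
            (mu * (2 / j`!%:R * dDelta pi pistar j
                       (traj f pistar xi (@zeroPert R m) k0)) `^ r^-1)) isT
                       (fun j => Hterm0 k0 j).
    have Hx : x = mu * (D k0 j0) `^ r^-1 by rewrite /x /M Hk0 Hj0.
    have Hj0p : (j0 <= p)%N by rewrite -ltnS ltn_ord.
    have Hk0T : (k0 < T)%N by apply: leq_trans (ltn_ord k0) HtT.
    have Hxm : x / mu = (D k0 j0) `^ r^-1.
      by rewrite Hx mulrC mulrA mulVf ?mul1r.
    have E1 : (x / mu) `^ r = D k0 j0 by rewrite Hxm powRK // HD0.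
    have E2 : x ^+ p.+1 = mu ^+ p.+1 * (D k0 j0) `^ (p.+1%:R / r).
      rewrite Hx exprMn; congr (_ * _).
      rewrite -powR_mulrn ?powR_ge0 // -powRrM mulrC //.
    have := Heta2 k0 Hk0T j0 Hj0p; rewrite /= -/(D k0 j0).
    rewrite /Phi E1 E2.
    set P := (D k0 j0) `^ _; set Q := D k0 j0.
    move=> H; apply: le_trans H; rewrite le_eqVlt; apply/orP; left; apply/eqP.
    ring.
  have HPhi0 : 0 <= Phi.
    have Hc : 0 <= 2 * L / (p.+1)`!%:R by rewrite divr_ge0 ?mulr_ge0 // ltW.
    by rewrite /Phi addr_ge0 ?powR_ge0 // mulr_ge0 ?exprn_ge0.
  pose Delta := fun k => if (k < t)%N then
       pi (traj f pi xi (@zeroPert R m) k) - pistar (traj f pi xi (@zeroPert R m) k) else 0.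
  have Hb : forall k, enorm (Delta k) <= eta.
    move=> k; rewrite /Delta; case: ifP => Hk.
      exact: le_trans (HDelta k Hk) HPhi.
    by rewrite enorm0 ltW.
  have := HISS xi xi HXxi HXxi Delta Hb t.
  rewrite subrr enorm0 ((HKL.1 t).1) add0r.
  rewrite /Delta traj_eq // -/y -/z.
  set Mm := \big[Num.max/0]_(k < t) _.
  have HMm : Mm <= Phi.
    apply: bigmaxr_le => // i; rewrite ltn_ord; exact: HDelta.
  have HMm0 : 0 <= Mm by apply: bigmax_ge0.
  have Hg : gamma Mm <= x.
    apply: ginv_le => //; apply: le_trans (Hginv x _); first by rewrite lee_fin.
    by rewrite Hx0 Hxa.
  move=> H; rewrite enormB; exact: le_trans H Hg.
exact: (main t0 t0 (leqnn _) Ht0T).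
Qed.
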